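(* Let $F:[0,\infty)\to[0,1]$ be a monotonically non-decreasing function, let $q_0\ge 0$, and let $(x_t)_{t\ge 0}$ be the real sequence defined by $x_0\ge 0$ and $x_{t+1}=F(x_t)\,x_t+q_0$ for $t\ge 0$. Suppose the set $\Gamma=\{t\ge 1 : x_t\le x_{t-1}\}$ is non-empty. Then: 1) If $q_0\neq 0$, then for every $t_0\in\Gamma$ and every $t\ge t_0$, $$x_t\le F(x_{t_0})^{t-t_0}\,x_{t_0}+q_0\,\frac{1-F(x_{t_0})^{t-t_0}}{1-F(x_{t_0})}.$$ 2) For every $t_0\in\Gamma$, $\sup_{t\ge t_0}x_t\le x_{t_0}$. 3) $\limsup_{t\to\infty}x_t\le \inf_{t_0\in\Gamma}x_{t_0}$.
   Context: $F(x)^{k}$ denotes the $k$-th power of the number $F(x)$. *)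

(* Defs.v *)
From HB Require Import structures.
From mathcomp Require Import all_boot all_order all_algebra.
From mathcomp Require Import all_classical all_reals all_analysis.
Set Implicit Arguments. Unset Strict Implicit. Unset Printing Implicit Defensive.
Import Order.TTheory GRing.Theory Num.Theory.
Local Open Scope ring_scope.
Local Open Scope classical_set_scope.

Definition Gamma {R : realType} (x : nat -> R) : set nat :=
  [set t | (1 <= t)%N /\ x t <= x t.-1].

(* Main.v *)
Require Import Defs.
From HB Require Import structures.
From mathcomp Require Import all_boot all_order all_algebra.
From mathcomp Require Import all_classical all_reals all_analysis.
Import Order.TTheory GRing.Theory Num.Theory.
Local Open Scope ring_scope.
Local Open Scope classical_set_scope.
From mathcomp Require Import ring lra.

Lemma aux (R : fieldType) (a X q : R) k : 1 - a != 0 ->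
  a * (a^+k * X + q * ((1 - a^+k)/(1-a))) + q = a^+k.+1 * X + q * ((1 - a^+k.+1)/(1-a)).
Proof. move=> h; rewrite exprS; field. exact: h. Qed.

Theorem lemma1 (R : realType) (F : R -> R) (q0 : R) (x : nat -> R)
  (HF01 : forall y, 0 <= y -> 0 <= F y <= 1)
  (HFmono : forall y z, 0 <= y -> y <= z -> F y <= F z)
  (Hq0 : 0 <= q0)
  (Hx0 : 0 <= x 0%N)
  (Hrec : forall t : nat, x t.+1 = F (x t) * x t + q0)
  (HGamma : Gamma x !=set0) :
  (q0 != 0 ->
    forall t0 : nat, Gamma x t0 -> forall t : nat, (t0 <= t)%N ->
      x t <= F (x t0) ^+ (t - t0) * x t0
             + q0 * ((1 - F (x t0) ^+ (t - t0)) / (1 - F (x t0))))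
  /\ (forall t0 : nat, Gamma x t0 ->
        (ereal_sup [set (x t)%:E | t in [set t | (t0 <= t)%N]] <= (x t0)%:E)%E)
  /\ (limn_esup (fun t => (x t)%:E) <= ereal_inf [set (x t0)%:E | t0 in Gamma x])%E.
Proof.
have xge0 : forall t, 0 <= x t.
  elim=> [//|t IH]; rewrite Hrec addr_ge0 // mulr_ge0 //.
  by have /ssrbool.andP[] := HF01 _ IH.
have step : forall s, x s.+1 <= x s -> x s.+2 <= x s.+1.
  move=> s H; rewrite (Hrec s.+1) [x s.+1 in X in _ <= X]Hrec lerD2r.
  apply: ler_pM => //; first by have /ssrbool.andP[] := HF01 _ (xge0 s.+1).
  exact: HFmono.
have mono : forall t0, Gamma x t0 -> forall k, x (t0 + k)%N.+1 <= x (t0 + k)%N.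
  move=> t0 [H1 H2]; elim=> [|k IH].
    rewrite !addn0; case: t0 H1 H2 => [//|t0] _ H2; exact: step H2.
  by rewrite addnS; apply: step.
have dec : forall t0, Gamma x t0 -> forall t, (t0 <= t)%N -> x t <= x t0.
  move=> t0 G t /subnKC <-; elim: (t - t0)%N => [|k IH]; first by rewrite addn0.
  by rewrite addnS (le_trans (mono _ G k)).
have P2 : forall t0 : nat, Gamma x t0 ->
        (ereal_sup [set (x t)%:E | t in [set t | (t0 <= t)%N]] <= (x t0)%:E)%E.
  move=> t0 G; apply: ge_ereal_sup => _ [t /= Ht <-].
  by rewrite lee_fin dec.
split; [|split=> //].
  move=> _ t0 G t /subnKC <-; rewrite addKn.
  set a := F (x t0).
  have [a0 a1] : 0 <= a /\ a <= 1 by have /ssrbool.andP[] := HF01 _ (xge0 t0).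
  have Fle : forall k, F (x (t0 + k)%N) <= a.
    move=> k; apply: HFmono => //; exact: dec (leq_addr _ _).
  have [ae1|an1] := eqVneq a 1.
    rewrite ae1 expr1n subrr mul0r mulr0 addr0 mul1r; exact: dec (leq_addr _ _).
  have a1' : 1 - a != 0 by rewrite subr_eq0 eq_sym.
  elim: (t - t0)%N => [|k IH]; first by rewrite addn0 expr0 mul1r subrr mul0r mulr0 addr0.
  rewrite addnS Hrec.
  apply: (le_trans (y := a * x (t0 + k)%N + q0)).
    by rewrite lerD2r ler_wpM2r.
  apply: (le_trans (y := a * (a ^+ k * x t0 + q0 * ((1 - a ^+ k) / (1 - a))) + q0)).
    by rewrite lerD2r ler_wpM2l.
  by rewrite aux.
apply: le_ereal_inf_tmp => _ [t0 G <-].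
apply: le_trans (P2 _ G).
apply: ereal_inf_lbound; exists [set t | (t0 <= t)%N] => //.
by exists t0.
Qed.
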